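(* In every state $\mathbf{x}$ of the common-chunk-protocol Markov process (with $k\ge 2$ chunks and any arrival rate $\lambda>0$), the total download rate satisfies \[ r \;\ge\; \frac{S\, r_0^2}{6k^2}, \qquad\text{where } r_0=\sum_{i=1}^k dS_i^+ . \]
   Context: Model: Fix an integer $k\ge 2$ (number of chunks of a file) and $\lambda>0$. There is always exactly one seed holding all $k$ chunks. Non-seed peers arrive according to a Poisson process of rate $\lambda$, each arriving with no chunks; each non-seed peer holds a subset (its profile) of $\{1,\dots,k\}$ and leaves the system immediately once it holds all $k$ chunks. The state $\mathbf{x}$ of the continuous-time Markov process is the number of non-seed peers with each profile. $S$ denotes the total number of peers present, including the seed. Each non-seed peer has an independent rate-1 Poisson clock; at each tick it draws a sample of peers independently and uniformly at random with replacement from the current $S$ peers (seed and itself included) and may instantaneously download at most one chunk that it lacks and that is held by some sampled peer (such a chunk is a ''match''). Counting draws with multiplicity, a chunk is ''rare'' in a sample of 3 draws if exactly one of the 3 draws holds it. Common chunk protocol: (i) a peer with no chunks draws 3 peers and downloads a chunk chosen uniformly among the rare matches, if there is any, otherwise nothing; (ii) a peer holding at least 1 and at most $k-2$ chunks draws 1 peer and downloads a uniformly chosen match, if any, otherwise nothing; (iii) a peer holding exactly $k-1$ chunks draws 3 peers and downloads its missing chunk only if that chunk is held by some draw and every chunk it holds is held by at least 2 of the 3 draws; otherwise nothing. Notation: $S_i$ ($1\le i\le k$) is the number of peers, including the seed, holding chunk $i$; $S_0$ is the number of peers holding no chunks; $\bar S_i=S-S_i$; $\bar T_i$ is the number of peers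 whose profile is exactly $\{1,\dots,k\}\setminus\{i\}$. $r=r(\mathbf{x})$ is the total rate of download events in state $\mathbf{x}$, i.e. the sum over all non-seed peers of the probability that a clock tick of that peer results in a download. $dS_i^+=dS_i^+(\mathbf{x})$ is the probability that a clock tick of a peer holding no chunks results in that peer downloading chunk $i$. *)

(* Defs.v *)
From HB Require Import structures.
From mathcomp Require Import all_boot all_order all_algebra.
Set Implicit Arguments. Unset Strict Implicit. Unset Printing Implicit Defensive.
Import Order.TTheory GRing.Theory Num.Theory.
Local Open Scope ring_scope.

(* A state x gives, for each profile A : {set 'I_k} (chunks are 'I_k),
   the number x A of non-seed peers with profile A.
   The population seen by a draw also contains the seed, whose profile is setT. *)

Definition cnt (k : nat) (x : {set 'I_k} -> nat) (B : {set 'I_k}) : nat :=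
  (x B + (B == setT))%N.

Definition Stot (k : nat) (x : {set 'I_k} -> nat) : nat :=
  (\sum_(B : {set 'I_k}) cnt x B)%N.

Definition nd (k : nat) (j : 'I_k) (B1 B2 B3 : {set 'I_k}) : nat :=
  ((j \in B1) + (j \in B2) + (j \in B3))%N.

Definition rareset (k : nat) (B1 B2 B3 : {set 'I_k}) : {set 'I_k} :=
  [set j | nd j B1 B2 B3 == 1%N].

(* probability that 3 independent uniform draws (with replacement) from the
   S peers have profiles B1, B2, B3 in that order *)
Definition triple_prob (R : realFieldType) (k : nat) (x : {set 'I_k} -> nat)
  (B1 B2 B3 : {set 'I_k}) : R :=
  (cnt x B1 * cnt x B2 * cnt x B3)%:R / (Stot x)%:R ^+ 3.

(* dS_i^+ : probability that a tick of an empty peer results in downloading chunk i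
   (chosen uniformly among the rare matches) *)
Definition dSplus (R : realFieldType) (k : nat) (x : {set 'I_k} -> nat) (i : 'I_k) : R :=
  \sum_(B1 : {set 'I_k}) \sum_(B2 : {set 'I_k}) \sum_(B3 : {set 'I_k})
    triple_prob R x B1 B2 B3 *
    (if i \in rareset B1 B2 B3 then (#|rareset B1 B2 B3|%:R)^-1 else 0).

(* download probability of a peer with no chunks: some rare match exists *)
Definition p_empty (R : realFieldType) (k : nat) (x : {set 'I_k} -> nat) : R :=
  \sum_(B1 : {set 'I_k}) \sum_(B2 : {set 'I_k}) \sum_(B3 : {set 'I_k})
    triple_prob R x B1 B2 B3 * (rareset B1 B2 B3 != set0)%:R.

(* download probability of a peer with profile A, 1 <= |A| <= k-2:
   one draw, success iff the drawn peer holds a chunk not in A *)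
Definition p_mid (R : realFieldType) (k : nat) (x : {set 'I_k} -> nat)
  (A : {set 'I_k}) : R :=
  \sum_(B : {set 'I_k}) (cnt x B)%:R / (Stot x)%:R * (~~ (B \subset A))%:R.

(* download probability of a peer with profile A, |A| = k-1: three draws,
   success iff its missing chunk is held by some draw and every chunk of A
   is held by at least 2 of the 3 draws *)
Definition p_last (R : realFieldType) (k : nat) (x : {set 'I_k} -> nat)
  (A : {set 'I_k}) : R :=
  \sum_(B1 : {set 'I_k}) \sum_(B2 : {set 'I_k}) \sum_(B3 : {set 'I_k})
    triple_prob R x B1 B2 B3 *
    ([|| ~~ (B1 \subset A), ~~ (B2 \subset A) | ~~ (B3 \subset A)]
     && [forall j in A, (2 <= nd j B1 B2 B3)%N])%:R.

Definition peer_prob (R : realFieldType) (k : nat) (x : {set 'I_k} -> nat)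
  (A : {set 'I_k}) : R :=
  if A == set0 then p_empty R x
  else if (#|A| <= k - 2)%N then p_mid R x A
  else if #|A| == k.-1 then p_last R x A
  else 0.

Definition rate (R : realFieldType) (k : nat) (x : {set 'I_k} -> nat) : R :=
  \sum_(A : {set 'I_k}) (x A)%:R * peer_prob R x A.

(* Main.v *)
Require Import Defs.
From HB Require Import structures.
From mathcomp Require Import all_boot all_order all_algebra.
From mathcomp Require Import ring lra zify.
Import Order.TTheory GRing.Theory Num.Theory.
Local Open Scope ring_scope.

Lemma exists_max (R : realFieldType) (n : nat) (F : 'I_n -> R) (i0 : 'I_n) :
  exists j, forall i, F i <= F j.
Proof.
have [j _ Hj] := @arg_maxP _ R 'I_n i0 xpredT F isT.
by exists j => i; apply: Hj.
Qed.


Lemma triple_fact (T : finType) (R : realFieldType) (f1 f2 f3 : T -> R) :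
  \sum_a \sum_b \sum_c (f1 a * f2 b * f3 c) =
  (\sum_a f1 a) * (\sum_b f2 b) * (\sum_c f3 c).
Proof.
rewrite -mulrA big_distrl /=; apply: eq_bigr => a _.
rewrite big_distrl big_distrr /=; apply: eq_bigr => b _.
rewrite big_distrr big_distrr /=; apply: eq_bigr => c _.
by rewrite !mulrA.
Qed.

Lemma triple_split (T : finType) (R : realFieldType) (f g h : T -> T -> T -> R) :
  \sum_a \sum_b \sum_c (f a b c + g a b c + h a b c) =
  \sum_a \sum_b \sum_c f a b c + \sum_a \sum_b \sum_c g a b c
  + \sum_a \sum_b \sum_c h a b c.
Proof.
rewrite -!big_split /=; apply: eq_bigr => a _.
rewrite -!big_split /=; apply: eq_bigr => b _.
by rewrite -!big_split.
Qed.

Lemma triple_le (T : finType) (R : realFieldType) (f g : T -> T -> T -> R) :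
  (forall a b c, f a b c <= g a b c) ->
  \sum_a \sum_b \sum_c f a b c <= \sum_a \sum_b \sum_c g a b c.
Proof.
move=> H; apply: ler_sum => a _; apply: ler_sum => b _; apply: ler_sum => c _.
exact: H.
Qed.

Lemma inv_nat_bnd (R : realFieldType) (n : nat) :
  0 <= (n%:R : R)^-1 /\ (n%:R : R)^-1 <= 1.
Proof.
split; first by rewrite invr_ge0 ler0n.
case: n => [|n]; first by rewrite invr0.
by rewrite invf_le1 ?ltr0Sn // ler1n.
Qed.

Lemma rare_term (R : realFieldType) (w1 w2 w3 v : R) (b1 b2 b3 : bool) :
  0 <= w1 -> 0 <= w2 -> 0 <= w3 -> 0 <= v -> v <= 1 ->
  w1 * w2 * w3 * (if (b1 + b2 + b3 == 1)%N then v else 0) <=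
  (w1 * b1%:R) * (w2 * (~~ b2)%:R) * (w3 * (~~ b3)%:R)
  + (w1 * (~~ b1)%:R) * (w2 * b2%:R) * (w3 * (~~ b3)%:R)
  + (w1 * (~~ b1)%:R) * (w2 * (~~ b2)%:R) * (w3 * b3%:R).
Proof.
move=> h1 h2 h3 hv hv1.
have hw : 0 <= w1 * w2 * w3 by rewrite !mulr_ge0.
case: b1; case: b2; case: b3 => /=; rewrite ?mulr0 ?mulr1 ?mul0r ?mulr0 ?addr0 ?add0r ?lexx //.
all: nra.
Qed.

Lemma last_term (R : realFieldType) (w1 w2 w3 : R) (a1 a2 a3 t1 t2 t3 s : bool) :
  0 <= w1 -> 0 <= w2 -> 0 <= w3 ->
  t1 ==> ~~ a1 -> t2 ==> ~~ a2 -> t3 ==> ~~ a3 ->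
  [&& a1, t2 & t3] ==> s -> [&& t1, a2 & t3] ==> s -> [&& t1, t2 & a3] ==> s ->
  (w1 * a1%:R) * (w2 * t2%:R) * (w3 * t3%:R)
  + (w1 * t1%:R) * (w2 * a2%:R) * (w3 * t3%:R)
  + (w1 * t1%:R) * (w2 * t2%:R) * (w3 * a3%:R) <= w1 * w2 * w3 * s%:R.
Proof.
move=> h1 h2 h3.
have hw : 0 <= w1 * w2 * w3 by rewrite !mulr_ge0.
case: a1; case: a2; case: a3; case: t1; case: t2; case: t3; case: s => //=;
  rewrite ?mulr0 ?mulr1 ?mul0r ?mulr0 ?addr0 ?add0r ?lexx //.

Qed.

Lemma real_key (R : realFieldType) (P E M T d : R) :
  0 <= P -> 0 <= E -> 0 <= M -> 0 <= T -> 0 <= d ->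
  P + E + M + T = 1 -> d <= 3 * P * (E + M + T) ^+ 2 ->
  d ^+ 2 / 6 <= E * d + M * P + 3 * P * T ^+ 3.
Proof.
move=> hP hE hM hT hd hsum hdb.
set s := E + M + T in hdb *.
have hPs : P + s = 1 by rewrite /s; lra.
have hsd : s = E + M + T by [].
clearbody s.
have hs0 : 0 <= s by rewrite hsd; lra.
have hs1 : s <= 1 by lra.
have h1 : 4 * P * s <= 1.
  have := sqr_ge0 (1 - 2 * s).
  have -> : P = 1 - s by lra.
  rewrite expr2; nra.
have h2 : d ^+ 2 <= 3 * d * P * s ^+ 2.
  have := ler_wpM2l hd hdb. rewrite expr2. nra.
have h3 : d ^+ 2 <= 3 / 4 * d * s.
  have : d * s * (4 * P * s) <= d * s * 1 by apply: ler_wpM2l => //; exact: mulr_ge0.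
  nra.
have hdM : d * M <= 3 * P * M.
  have := ler_wpM2r hM hdb.
  have : s ^+ 2 <= 1 by rewrite expr2; nra.
  move=> hs2 h. have : P * M * s ^+ 2 <= P * M * 1 by apply: ler_wpM2l => //; exact: mulr_ge0.
  nra.
suff : d * s <= 8 * E * d + 8 * M * P + 24 * P * T ^+ 3 by nra.
case: (lerP T (E + M)) => hTEM.
  have : d * T <= d * (E + M) by apply: ler_wpM2l.
  have := mulr_ge0 hP (exprn_ge0 3 hT).
  have := mulr_ge0 hE hd.
  rewrite hsd; nra.
have hs2 : s ^+ 2 <= 4 * T ^+ 2.
  rewrite hsd !expr2; nra.
have : d * T <= 3 * P * s ^+ 2 * T by apply: ler_wpM2r.
have : P * T * s ^+ 2 <= P * T * (4 * T ^+ 2) by apply: ler_wpM2l => //; exact: mulr_ge0.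
move=> h4 h5; have h6 : d * s = d * (E + M) + d * T by rewrite hsd; ring.
rewrite h6; nra.
Qed.

Set Implicit Arguments. Unset Strict Implicit.

Definition wt (R : realFieldType) (k : nat) (x : {set 'I_k} -> nat) (B : {set 'I_k}) : R :=
  (cnt x B)%:R / (Stot x)%:R.

Lemma Stot_pos (k : nat) (x : {set 'I_k} -> nat) : (0 < Stot x)%N.
Proof. by rewrite /Stot (bigD1 setT) //= /cnt eqxx addn1. Qed.

Lemma SR_neq0 (R : realFieldType) (k : nat) (x : {set 'I_k} -> nat) :
  (Stot x)%:R != 0 :> R.
Proof. by rewrite pnatr_eq0 -lt0n Stot_pos. Qed.

Lemma wt_ge0 (R : realFieldType) (k : nat) (x : {set 'I_k} -> nat) B : 0 <= wt R x B.
Proof. by rewrite /wt divr_ge0. Qed.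

Lemma tp_eq (R : realFieldType) (k : nat) (x : {set 'I_k} -> nat) B1 B2 B3 :
  triple_prob R x B1 B2 B3 = wt R x B1 * wt R x B2 * wt R x B3.
Proof. rewrite /triple_prob /wt !natrM -exprVn; ring. Qed.

Lemma tp_ge0 (R : realFieldType) (k : nat) (x : {set 'I_k} -> nat) B1 B2 B3 :
  0 <= triple_prob R x B1 B2 B3.
Proof. by rewrite tp_eq; apply: mulr_ge0; [apply: mulr_ge0|]; apply: wt_ge0. Qed.

Lemma sum_wt (R : realFieldType) (k : nat) (x : {set 'I_k} -> nat) :
  \sum_B wt R x B = 1.
Proof.
rewrite /wt -big_distrl /= -natr_sum -/(Stot x) divff //; exact: SR_neq0.
Qed.

Lemma dS_bound (R : realFieldType) (k : nat) (x : {set 'I_k} -> nat) (i : 'I_k) :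
  dSplus R x i <= 3 * (\sum_B wt R x B * (i \in B)%:R)
                    * (\sum_B wt R x B * (i \notin B)%:R) ^+ 2.
Proof.
rewrite /dSplus.
apply: le_trans.
  apply: (@triple_le _ _ _ (fun B1 B2 B3 =>
    (wt R x B1 * (i \in B1)%:R) * (wt R x B2 * (i \notin B2)%:R) * (wt R x B3 * (i \notin B3)%:R)
  + (wt R x B1 * (i \notin B1)%:R) * (wt R x B2 * (i \in B2)%:R) * (wt R x B3 * (i \notin B3)%:R)
  + (wt R x B1 * (i \notin B1)%:R) * (wt R x B2 * (i \notin B2)%:R) * (wt R x B3 * (i \in B3)%:R))).
  move=> B1 B2 B3; rewrite tp_eq /rareset inE /nd.
  have [h0 h1] := inv_nat_bnd R #|[set j | ((j \in B1) + (j \in B2) + (j \in B3) == 1)%N]|.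
  by apply: rare_term => //; apply: wt_ge0.
rewrite triple_split !triple_fact expr2.
rewrite le_eqVlt; apply/orP; left; apply/eqP; ring.
Qed.

Lemma pempty_ge (R : realFieldType) (k : nat) (x : {set 'I_k} -> nat) (i : 'I_k) :
  dSplus R x i <= p_empty R x.
Proof.
apply: triple_le => B1 B2 B3.
have h := tp_ge0 R x B1 B2 B3.
case: ifP => hi; last by rewrite mulr0 mulr_ge0.
have -> : rareset B1 B2 B3 != set0 by apply/set0Pn; exists i.
have [_ h1] := inv_nat_bnd R #|rareset B1 B2 B3|.
by rewrite mulr1 ler_piMr.
Qed.

Lemma pmid_ge (R : realFieldType) (k : nat) (x : {set 'I_k} -> nat) (i : 'I_k) (A : {set 'I_k}) :
  i \notin A -> \sum_B wt R x B * (i \in B)%:R <= p_mid R x A.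
Proof.
move=> hiA; apply: ler_sum => B _.
rewrite -/(wt R x B).
case hiB: (i \in B); last by rewrite mulr0 mulr_ge0 // wt_ge0.
have -> : ~~ (B \subset A).
  by apply/negP => /subsetP /(_ i hiB); rewrite (negbTE hiA).
by [].
Qed.

Lemma sum_ind1 (R : realFieldType) (k : nat) (x : {set 'I_k} -> nat) (T : {set 'I_k}) :
  \sum_B wt R x B * (B == T)%:R = wt R x T.
Proof.
rewrite (bigD1 T) //= eqxx mulr1 big1 ?addr0 // => B /negbTE ->.
by rewrite mulr0.
Qed.

Lemma plast_ge (R : realFieldType) (k : nat) (x : {set 'I_k} -> nat) (i : 'I_k) :
  3 * (\sum_B wt R x B * (i \in B)%:R) * wt R x [set~ i] * wt R x [set~ i]
    <= p_last R x [set~ i].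
Proof.
set Ts := [set~ i].
have hiT : i \notin Ts by rewrite !inE eqxx.
apply: le_trans; last first.
  apply: (@triple_le _ _ (fun B1 B2 B3 =>
    (wt R x B1 * (i \in B1)%:R) * (wt R x B2 * (B2 == Ts)%:R) * (wt R x B3 * (B3 == Ts)%:R)
  + (wt R x B1 * (B1 == Ts)%:R) * (wt R x B2 * (i \in B2)%:R) * (wt R x B3 * (B3 == Ts)%:R)
  + (wt R x B1 * (B1 == Ts)%:R) * (wt R x B2 * (B2 == Ts)%:R) * (wt R x B3 * (i \in B3)%:R))).
  move=> B1 B2 B3 /=; rewrite tp_eq.
  have notT : forall B, (B == Ts) ==> (i \notin B).
    by move=> B; apply/implyP => /eqP ->.
  have nsub : forall C : {set 'I_k}, i \in C -> ~~ (C \subset Ts).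
    by move=> C hC; apply/negP => /subsetP /(_ i hC); rewrite (negbTE hiT).
  apply: last_term; rewrite ?wt_ge0 ?notT //.
  - apply/implyP => H; case/andP: H => h1 H; case/andP: H => /eqP e2 /eqP e3; rewrite e2 e3 nsub //=.
    by apply/forallP => j; apply/implyP => hj; rewrite /nd hj; case: (j \in B1).
  - apply/implyP => H; case/andP: H => /eqP e1 H; case/andP: H => h2 /eqP e3; rewrite e1 e3 (nsub B2 h2) ?orbT //=.
    by apply/forallP => j; apply/implyP => hj; rewrite /nd hj; case: (j \in B2).
  - apply/implyP => H; case/andP: H => /eqP e1 H; case/andP: H => /eqP e2 h3; rewrite e1 e2 (nsub B3 h3) ?orbT //=.
    by apply/forallP => j; apply/implyP => hj; rewrite /nd hj; case: (j \in B3).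
rewrite triple_split !triple_fact !sum_ind1.
rewrite le_eqVlt; apply/orP; left; apply/eqP; ring.
Qed.

Lemma cnt_x (k : nat) (x : {set 'I_k} -> nat) (i : 'I_k) (B : {set 'I_k}) :
  i \notin B -> cnt x B = x B.
Proof.
move=> hiB; rewrite /cnt.
have -> : (B == setT) = false by apply/negbTE/eqP => h; move: hiB; rewrite h inE.
by rewrite addn0.
Qed.

Lemma xw (R : realFieldType) (k : nat) (x : {set 'I_k} -> nat) (i : 'I_k) (B : {set 'I_k}) :
  i \notin B -> (x B)%:R = (Stot x)%:R * wt R x B.
Proof.
by move=> hiB; rewrite /wt -(cnt_x x hiB) mulrC divfK // SR_neq0.
Qed.

Lemma Ts_card (k : nat) (i : 'I_k) : #|[set~ i]| = k.-1.
Proof. by rewrite cardsC1 card_ord. Qed.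

Lemma Ts_ne0 (k : nat) (i : 'I_k) : (2 <= k)%N -> [set~ i] != set0.
Proof.
move=> hk; apply/eqP => h; have := Ts_card i; rewrite h cards0; lia.
Qed.

Lemma mid_card (k : nat) (i : 'I_k) (A : {set 'I_k}) :
  i \notin A -> A != [set~ i] -> (#|A| <= k - 2)%N.
Proof.
move=> hiA hAT.
have sub : A \subset [set~ i].
  by apply/subsetP => j hj; rewrite !inE; apply/eqP => e; move: hiA; rewrite -e hj.
have pr : A \proper [set~ i] by rewrite properEneq sub andbT.
have := proper_card pr; rewrite Ts_card; lia.
Qed.

Lemma pp_ge0 (R : realFieldType) (k : nat) (x : {set 'I_k} -> nat) (A : {set 'I_k}) :
  0 <= peer_prob R x A.
Proof.
rewrite /peer_prob; case: ifP => _.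
  apply: sumr_ge0 => B1 _; apply: sumr_ge0 => B2 _; apply: sumr_ge0 => B3 _.
  by apply: mulr_ge0; [apply: tp_ge0 | apply: ler0n].
case: ifP => _.
  by apply: sumr_ge0 => B _; apply: mulr_ge0; [apply: divr_ge0|apply: ler0n].
case: ifP => _ //.
apply: sumr_ge0 => B1 _; apply: sumr_ge0 => B2 _; apply: sumr_ge0 => B3 _.
by apply: mulr_ge0; [apply: tp_ge0 | apply: ler0n].
Qed.

Lemma dS_ge0 (R : realFieldType) (k : nat) (x : {set 'I_k} -> nat) (i : 'I_k) :
  0 <= dSplus R x i.
Proof.
apply: sumr_ge0 => B1 _; apply: sumr_ge0 => B2 _; apply: sumr_ge0 => B3 _.
apply: mulr_ge0; first by apply: tp_ge0.
by case: ifP => _ //; have [h _] := inv_nat_bnd R #|rareset B1 B2 B3|.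
Qed.

Lemma Qdec (R : realFieldType) (k : nat) (x : {set 'I_k} -> nat) (i : 'I_k) :
  (2 <= k)%N ->
  \sum_(B : {set 'I_k}) wt R x B * (i \notin B)%:R = wt R x set0 + wt R x [set~ i]
     + \sum_(B : {set 'I_k} | (i \notin B) && (B != set0) && (B != [set~ i])) wt R x B.
Proof.
move=> hk.
rewrite (eq_bigr (fun B : {set 'I_k} => if i \notin B then wt R x B else 0)); last first.
  by move=> B _; case: (i \notin B); rewrite ?mulr1 ?mulr0.
rewrite -big_mkcond /= (bigD1 set0) ?inE //= (bigD1 [set~ i]) /=; last first.
  by rewrite !inE eqxx /= Ts_ne0.
by rewrite addrA.
Qed.

Lemma rate_ge (R : realFieldType) (k : nat) (x : {set 'I_k} -> nat) (i : 'I_k) :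
  (2 <= k)%N ->
  (x set0)%:R * p_empty R x + (x [set~ i])%:R * p_last R x [set~ i]
  + \sum_(B : {set 'I_k} | (i \notin B) && (B != set0) && (B != [set~ i]))
       (x B)%:R * (\sum_C wt R x C * (i \in C)%:R) <= rate R x.
Proof.
move=> hk.
rewrite /rate [X in _ <= X](bigID (fun A : {set 'I_k} => i \notin A)) /=.
rewrite -[X in X <= _]addr0; apply: lerD; last first.
  by apply: sumr_ge0 => A _; apply: mulr_ge0; [apply: ler0n | apply: pp_ge0].
have -> : \sum_(A : {set 'I_k} | i \notin A) (x A)%:R * peer_prob R x A =
   (x set0)%:R * peer_prob R x set0 + (x [set~ i])%:R * peer_prob R x [set~ i]
   + \sum_(A : {set 'I_k} | (i \notin A) && (A != set0) && (A != [set~ i]))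
        (x A)%:R * peer_prob R x A.
  rewrite (bigD1 set0) ?inE //= (bigD1 [set~ i]) /=; last first.
    by rewrite !inE eqxx /= Ts_ne0.
  by rewrite addrA.
apply: lerD; first apply: lerD.
- by rewrite /peer_prob eqxx.
- rewrite /peer_prob (negbTE (Ts_ne0 i hk)) Ts_card.
  have -> : (k.-1 <= k - 2)%N = false by apply/negbTE; rewrite -ltnNge; lia.
  by rewrite eqxx.
- apply: ler_sum => A /andP [/andP [hiA hA0] hAT].
  apply: ler_wpM2l; first by apply: ler0n.
  by rewrite /peer_prob (negbTE hA0) (mid_card hiA hAT); apply: pmid_ge.
Qed.

Theorem lemma1 (R : realFieldType) (k : nat) (lambda : R)
  (hk : (2 <= k)%N) (hlambda : 0 < lambda)
  (x : {set 'I_k} -> nat) (hx : x setT = 0%N) :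
  (Stot x)%:R * (\sum_(i < k) dSplus R x i) ^+ 2 / (6 * k ^ 2)%:R
    <= rate R x.
Proof.
have k0 : (0 < k)%N by lia.
have [i hmax] := @exists_max R k (fun j => dSplus R x j) (Ordinal k0).
set d := dSplus R x i.
set P := \sum_(B : {set 'I_k}) wt R x B * (i \in B)%:R.
set E := wt R x set0.
set Tf := wt R x [set~ i].
set Mf := \sum_(B : {set 'I_k} | (i \notin B) && (B != set0) && (B != [set~ i])) wt R x B.
set SR := (Stot x)%:R : R.
have hQ := Qdec R x i hk.
have hPQ : P + \sum_(B : {set 'I_k}) wt R x B * (i \notin B)%:R = 1.
  rewrite /P -big_split /= -[RHS](sum_wt R x); apply: eq_bigr => B _.
  by case: (i \in B); rewrite /= ?mulr1 ?mulr0 ?addr0 ?add0r.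
have hd := dS_bound R x i; rewrite hQ -/P -/E -/Tf -/Mf in hd.
rewrite hQ -/E -/Tf -/Mf in hPQ.
have hP0 : 0 <= P by apply: sumr_ge0 => B _; apply: mulr_ge0; [apply: wt_ge0|apply: ler0n].
have hE0 : 0 <= E by apply: wt_ge0.
have hT0 : 0 <= Tf by apply: wt_ge0.
have hM0 : 0 <= Mf by apply: sumr_ge0 => B _; apply: wt_ge0.
have hd0 : 0 <= d by apply: dS_ge0.
have key : d ^+ 2 / 6 <= E * d + Mf * P + 3 * P * Tf ^+ 3.
  apply: real_key => //; first by lra.
  by have -> : E + Mf + Tf = E + Tf + Mf by ring.
have hr := rate_ge R x i hk.
have hpe := pempty_ge R x i; rewrite -/d in hpe.
have hpl := plast_ge R x i; rewrite -/P -/Tf in hpl.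
rewrite -big_distrl /= in hr.
have hxM : \sum_(B : {set 'I_k} | (i \notin B) && (B != set0) && (B != [set~ i])) (x B)%:R
           = SR * Mf.
  rewrite /Mf big_distrr /=; apply: eq_bigr => B /andP [/andP [hiB _] _].
  exact: (xw R x hiB).
rewrite hxM (xw R x (i := i)) ?inE // (xw R x (i := i) (B := [set~ i])) ?inE ?eqxx //
  -/SR -/E -/Tf -/P in hr.
have hS0 : 0 < SR by rewrite /SR ltr0n Stot_pos.
have hrate : SR * (d ^+ 2 / 6) <= rate R x.
  apply: le_trans hr.
  have h1 : SR * E * d <= SR * E * p_empty R x by apply: ler_wpM2l => //; nra.
  have h2 : SR * Tf * (3 * P * Tf * Tf) <= SR * Tf * p_last R x [set~ i]
    by apply: ler_wpM2l => //; nra.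
  have h3 := ler_wpM2l (ltW hS0) key.
  have heq : SR * (E * d + Mf * P + 3 * P * Tf ^+ 3) =
    SR * E * d + SR * Tf * (3 * P * Tf * Tf) + SR * Mf * P by ring.
  lra.
set r0 := \sum_(i0 < k) dSplus R x i0.
have hr0 : r0 <= k%:R * d.
  rewrite /r0; apply: le_trans (_ : \sum_(i0 < k) d <= _).
    by apply: ler_sum => j _; apply: hmax.
  by rewrite sumr_const card_ord mulr_natl.
have hr00 : 0 <= r0 by apply: sumr_ge0 => j _; apply: dS_ge0.
have hkR : 0 < (k%:R : R) by rewrite ltr0n.
have hsq : r0 ^+ 2 <= (k%:R * d) ^+ 2 by rewrite !expr2; nra.
apply: le_trans hrate.
rewrite natrM natrX ler_pdivrMr; last by apply: mulr_gt0 => //; apply: exprn_gt0.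
have -> : SR * (d ^+ 2 / 6) * (6 * k%:R ^+ 2) = SR * (k%:R * d) ^+ 2.
  by rewrite exprMn; field.
by apply: ler_wpM2l => //; apply: ltW.
Qed.
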